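(* Let $M>0$, $\tau>0$, $p'=\lfloor p/2\rfloor$, and for $\theta=(\theta_1,\dots,\theta_{p'})\in\{0,1\}^{p'}$ define $\Sigma(\theta)$ by $$\Sigma(\theta)^{-1}=M^{-1}I_p+\sum_{m=1}^{p'}\theta_m\frac{\tau}{\sqrt n}e_me_m^T.$$ If $\tau/\sqrt n\le M/3$ and $\tau/M\le1/3$, then there exists a positive constant $C$ such that $$\min_{H(\theta,\theta')\ge1}\frac{\|w_{GMV}(\Sigma(\theta'))-w_{GMV}(\Sigma(\theta))\|^2}{H(\theta,\theta')}\cdot\frac{p'}{2}\cdot\min_{H(\theta,\theta')=1}\|\mathbb{P}_\theta\wedge\mathbb{P}_{\theta'}\|\ \ge\ \frac{C}{np}$$ for all sufficiently large $n$.
   Context: $e_m$ is the $m$-th standard basis vector of $\mathbb{R}^p$. $H(\theta,\theta')=\sum_m|\theta_m-\theta'_m|$ is the Hamming distance. $\mathbb{P}_\theta$ is the joint law of $X_1,\dots,X_n$ i.i.d. $N_p(0,\Sigma(\theta))$. For probability measures $P,Q$ with densities $p,q$ w.r.t. a common dominating measure, $\|P\wedge Q\|=\int\min(p,q)$. For $\Sigma\in\mathcal{C}_p$ (symmetric positive definite), $w_{GMV}(\Sigma)=\Sigma^{-1}\mathbf{1}/(\mathbf{1}^T\Sigma^{-1}\mathbf{1})$, the minimizer of $w^T\Sigma w$ subject to $w^T\mathbf{1}=1$; $\|\cdot\|$ is the Euclidean norm. Here $p=p_n\to\infty$. *)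

(* Defs.v *)
From HB Require Import structures.
From mathcomp Require Import all_boot all_order all_algebra.
From mathcomp Require Import all_classical all_reals all_analysis.
Set Implicit Arguments. Unset Strict Implicit. Unset Printing Implicit Defensive.
Import Order.TTheory GRing.Theory Num.Theory.
Local Open Scope ring_scope.

Section Defs.
Variable R : realType.

Lemma half_le (p : nat) : (p./2 <= p)%N.
Proof. by rewrite -{2}(odd_double_half p) -addnn addnA leq_addl. Qed.

(* standard basis index e_m, m < p' = floor(p/2), seen inside 'I_p *)
Definition embm (p : nat) (m : 'I_(p./2)) : 'I_p := widen_ord (half_le p) m.

Definition Sigma_inv (M tau : R) (n p : nat) (th : {ffun 'I_(p./2) -> bool}) : 'M[R]_p :=
  M^-1 *: 1%:M + \sum_(m < p./2)
     (((th m)%:R * (tau / Num.sqrt (n%:R))) *: delta_mx (embm m) (embm m)).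

Definition Sigma (M tau : R) (n p : nat) (th : {ffun 'I_(p./2) -> bool}) : 'M[R]_p :=
  invmx (Sigma_inv M tau n th).

Definition ones (p : nat) : 'cV[R]_p := const_mx 1.

Definition w_GMV (p : nat) (S : 'M[R]_p) : 'cV[R]_p :=
  ((((ones p)^T *m invmx S *m ones p) 0 0)^-1) *: (invmx S *m ones p).

Definition sqnorm (p : nat) (v : 'cV[R]_p) : R := \sum_(i < p) (v i 0) ^+ 2.

Definition hamming (k : nat) (t t' : {ffun 'I_k -> bool}) : nat :=
  \sum_(m < k) (t m != t' m).

Definition gauss_dens (p : nat) (S : 'M[R]_p) (x : 'cV[R]_p) : R :=
  ((Num.sqrt (2 * pi)) ^+ p)^-1 * (Num.sqrt (\det S))^-1 *
  expR (- ((x^T *m invmx S *m x) 0 0) / 2).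

(* joint density of X_1..X_n iid N_p(0,S); row i of X is X_i^T *)
Definition joint_dens (n p : nat) (S : 'M[R]_p) (X : 'M[R]_(n, p)) : R :=
  \prod_(i < n) gauss_dens S (row i X)^T.

Local Open Scope ereal_scope.

(* iterated Lebesgue integral over R^k (for nonnegative integrands this is
   the integral w.r.t. Lebesgue measure on R^k, by Tonelli) *)
Fixpoint iint (k : nat) : ('rV[R]_k -> \bar R) -> \bar R :=
  match k return ('rV[R]_k -> \bar R) -> \bar R with
  | 0 => fun f => f 0%R
  | k'.+1 => fun f =>
      \int[@lebesgue_measure R]_x iint (fun v : 'rV[R]_k' => f (row_mx (x%:M) v))
  end.

Definition affinity (M tau : R) (n p : nat) (t t' : {ffun 'I_(p./2) -> bool}) : \bar R :=
  iint (fun v : 'rV[R]_(n * p) =>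
    (Num.min (joint_dens (Sigma M tau n t) (vec_mx v))
             (joint_dens (Sigma M tau n t') (vec_mx v)))%:E).

Definition ratio (M tau : R) (n p : nat) (t t' : {ffun 'I_(p./2) -> bool}) : R :=
  (sqnorm (w_GMV (Sigma M tau n t') - w_GMV (Sigma M tau n t)) / (hamming t t')%:R)%R.

Definition lhs (M tau : R) (n p : nat) : \bar R :=
  (\big[Order.min/+oo]_(tt : {ffun 'I_(p./2) -> bool} * {ffun 'I_(p./2) -> bool}
        | (1 <= hamming tt.1 tt.2)%N) (ratio M tau n tt.1 tt.2)%:E)
  * ((p./2)%:R / 2)%:E
  * (\big[Order.min/+oo]_(tt : {ffun 'I_(p./2) -> bool} * {ffun 'I_(p./2) -> bool}
        | hamming tt.1 tt.2 == 1%N) affinity M tau n tt.1 tt.2).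

End Defs.

(* Main.v *)
Require Import Defs.
From HB Require Import structures.
From mathcomp Require Import all_boot all_order all_algebra.
From mathcomp Require Import all_classical all_reals all_analysis.
From mathcomp Require Import measurable_realfun ring lra zify.
Import Order.TTheory GRing.Theory Num.Theory.
Local Open Scope classical_set_scope.
Local Open Scope ring_scope.
Set Implicit Arguments. Unset Strict Implicit. Unset Printing Implicit Defensive.

Section Iint.
Variable R : realType.
Local Notation mu := (@lebesgue_measure R).

Fixpoint good (k : nat) : forall d (T : measurableType d), (T -> 'rV[R]_k -> R) -> Prop :=
  match k with
  | 0 => fun d T F => measurable_fun setT (fun x => F x 0)
  | k'.+1 => fun d T F =>
      @good k' _ (T * R)%type (fun z v => F z.1 (row_mx (z.2)%:M v))
  end.

Lemma iint_ge0 k (f : 'rV[R]_k -> \bar R) : (forall v, 0 <= f v)%E -> (0 <= iint f)%E.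
Proof.
elim: k f => [|k IH] f f0 /=; first exact: f0.
by apply: integral_ge0 => x _; apply: IH.
Qed.

Lemma iint_meas k : forall d (T : measurableType d) (F : T -> 'rV[R]_k -> R),
  good F -> (forall x v, 0 <= F x v) ->
  measurable_fun [set: T] ((fun x => iint (fun v => (F x v)%:E)) : T -> \bar R).
Proof.
elim: k => [|k IH] d T F gF F0 /=.
  by apply/measurable_EFinP.
have := IH _ _ _ gF (fun z v => F0 _ _).
move=> mG.
apply: (measurable_fun_fubini_tonelli_F (m2 := mu)
  (fun z : T * R => iint (fun v => (F z.1 (row_mx (z.2)%:M v))%:E))) => //.
by move=> z; apply: iint_ge0 => v; rewrite lee_fin.
Qed.


Lemma row_mx0 k (x : R) (v : 'rV[R]_k) : (row_mx x%:M v : 'rV_(k.+1)) 0 ord0 = x.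
Proof.
rewrite mxE; case: splitP => [i _|i /= Hi]; last by [].
by rewrite ord1 mxE eqxx mulr1n.
Qed.

Lemma row_mxS k (x : R) (v : 'rV[R]_k) (j : 'I_k) :
  (row_mx x%:M v : 'rV_(k.+1)) 0 (lift ord0 j) = v 0 j.
Proof.
rewrite mxE; case: splitP => [i /= Hi|i /= Hi]; first by case: i Hi => -[].
by congr (v 0 _); apply: val_inj; move: Hi; rewrite /bump /= add1n; case.
Qed.

Lemma good_precomp k : forall d (T : measurableType d) (F : T -> 'rV[R]_k -> R)
  d' (T' : measurableType d') (c : T' -> T),
  measurable_fun setT c -> good F -> good (fun x => F (c x)).
Proof.
elim: k => [|k IH] d T F d' T' c mc /= gF.
  exact: (measurableT_comp gF mc).
have mc' : measurable_fun [set: (T' * R)%type] (fun z : T' * R => (c z.1, z.2)).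
  apply: measurable_fun_pair => //.
  exact: (measurableT_comp mc measurable_fst).
exact: (IH _ _ _ _ _ _ mc' gF).
Qed.

Lemma good_const k : forall d (T : measurableType d) (g : T -> R),
  measurable_fun setT g -> good (fun x (_ : 'rV[R]_k) => g x).
Proof.
elim: k => [|k IH] d T g mg //=.
apply: IH; exact: (measurableT_comp mg measurable_fst).
Qed.

Lemma good_bin (h : R -> R -> R) :
  (forall d (T : measurableType d) (f g : T -> R), measurable_fun setT f ->
     measurable_fun setT g -> measurable_fun setT (fun x => h (f x) (g x))) ->
  forall k d (T : measurableType d) (F G : T -> 'rV[R]_k -> R),
  good F -> good G -> good (fun x v => h (F x v) (G x v)).
Proof.
move=> Hh; elim => [|k IH] d T F G /= gF gG; first exact: Hh.
exact: (IH _ _ _ _ gF gG).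
Qed.

Lemma good_un (h : R -> R) : measurable_fun setT h ->
  forall k d (T : measurableType d) (F : T -> 'rV[R]_k -> R),
  good F -> good (fun x v => h (F x v)).
Proof.
move=> Hh; elim => [|k IH] d T F /= gF; first exact: (measurableT_comp Hh gF).
exact: (IH _ _ _ gF).
Qed.

Lemma good_ext k : forall d (T : measurableType d) (F G : T -> 'rV[R]_k -> R),
  (forall x v, F x v = G x v) -> good F -> good G.
Proof.
elim: k => [|k IH] d T F G eFG /=.
  by have -> : (fun x => G x 0) = (fun x => F x 0) by apply: funext => x; rewrite eFG.
by apply: IH => z v; rewrite eFG.
Qed.

Lemma good_coord k : forall d (T : measurableType d) (j : 'I_k),
  good (fun (x : T) (v : 'rV[R]_k) => v 0 j).
Proof.
elim: k => [|k IH] d T j; first by case: j.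
have [->|[j' ->]] : j = ord0 \/ exists j', j = lift ord0 j'.
  case: (unliftP ord0 j) => [j' ->|->]; [by right; exists j' | by left].
  rewrite /=; apply: (good_ext (F := fun z _ => z.2)).
    by move=> z v; rewrite row_mx0.
  by apply: good_const; exact: measurable_snd.
rewrite /=; apply: (good_ext (F := fun z v => v 0 j')).
  by move=> z v; rewrite row_mxS.
exact: IH.
Qed.


Definition goodf k (f : 'rV[R]_k -> R) := good (fun _ : R => f).

Lemma goodf_sec k (f : 'rV[R]_k.+1 -> R) (x : R) :
  goodf f -> goodf (fun v => f (row_mx x%:M v)).
Proof.
move=> gf; rewrite /goodf.
have mc : measurable_fun [set: R] (fun y : R => (y, x)).
  by apply: measurable_fun_pair => //; exact: measurable_cst.
exact: (good_precomp (T := (R * R)%type) (F := fun z v => f (row_mx (z.2)%:M v)) mc gf).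
Qed.

Lemma goodf_meas k (f : 'rV[R]_k.+1 -> R) : goodf f -> (forall v, 0 <= f v) ->
  measurable_fun [set: R]
    ((fun x => iint (fun v => (f (row_mx x%:M v))%:E)) : R -> \bar R).
Proof.
move=> gf f0.
have mc : measurable_fun [set: R] (fun y : R => (y, y)).
  by apply: measurable_fun_pair.
have := good_precomp (T := (R * R)%type) (F := fun z v => f (row_mx (z.2)%:M v)) mc gf.
move=> g2.
exact: (iint_meas g2 (fun _ _ => f0 _)).
Qed.

Lemma iint_le k : forall (f g : 'rV[R]_k -> R), goodf f -> goodf g ->
  (forall v, 0 <= f v) -> (forall v, f v <= g v) ->
  (iint (fun v => (f v)%:E) <= iint (fun v => (g v)%:E))%E.
Proof.
elim: k => [|k IH] f g gf gg f0 fg /=; first by rewrite lee_fin.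
have g0 : forall v, 0 <= g v by move=> v; exact: le_trans (f0 v) (fg v).
apply: ge0_le_integral => //.
- by move=> x _; apply: iint_ge0 => v; rewrite lee_fin.
- exact: goodf_meas.
- exact: goodf_meas.
- move=> x _; apply: IH => //; try exact: goodf_sec.
Qed.

Lemma iint_add k : forall (f g : 'rV[R]_k -> R), goodf f -> goodf g ->
  (forall v, 0 <= f v) -> (forall v, 0 <= g v) ->
  iint (fun v => (f v + g v)%:E) = (iint (fun v => (f v)%:E) + iint (fun v => (g v)%:E))%E.
Proof.
elim: k => [|k IH] f g gf gg f0 g0 /=; first by [].
rewrite -ge0_integralD //.
- apply: eq_integral => x _; apply: IH => //; exact: goodf_sec.
- by move=> x _; apply: iint_ge0 => v; rewrite lee_fin.
- exact: goodf_meas.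
- by move=> x _; apply: iint_ge0 => v; rewrite lee_fin.
- exact: goodf_meas.
Qed.

Lemma iint_scale k : forall (c : R) (f : 'rV[R]_k -> R), 0 <= c -> goodf f ->
  (forall v, 0 <= f v) ->
  iint (fun v => (c * f v)%:E) = (c%:E * iint (fun v => (f v)%:E))%E.
Proof.
elim: k => [|k IH] c f c0 gf f0 /=; first by [].
rewrite -ge0_integralZl_EFin //.
- apply: eq_integral => x _; apply: IH => //; exact: goodf_sec.
- by move=> x _; apply: iint_ge0 => v; rewrite lee_fin.
- exact: goodf_meas.
Qed.


Lemma good_prodl k d (T : measurableType d) (I : Type) (r : seq I)
   (F : I -> T -> 'rV[R]_k -> R) :
  (forall i, good (F i)) -> good (fun x v => \prod_(i <- r) F i x v).
Proof.
move=> gF; elim: r => [|i r IH].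
  apply: (good_ext (F := fun _ _ => 1)); first by move=> x v; rewrite big_nil.
  by apply: good_const; exact: measurable_cst.
apply: (good_ext (F := fun x v => F i x v * \prod_(j <- r) F j x v)).
  by move=> x v; rewrite big_cons.
apply: (good_bin (h := fun a b => a * b)) => //.
by move=> d' T' f g mf mg; exact: measurable_funM.
Qed.

Lemma goodf_prod k (h : 'I_k -> R -> R) : (forall l, measurable_fun setT (h l)) ->
  goodf (fun v => \prod_(l < k) h l (v 0 l)).
Proof.
move=> mh; rewrite /goodf.
apply: (@good_prodl k _ R _ _ (fun l (_ : R) v => h l (v 0 l))) => l.
exact: (good_un (mh l) (good_coord _ l)).
Qed.

Lemma iint_prod k : forall (h : 'I_k -> R -> R) (c : 'I_k -> R),
  (forall l, measurable_fun setT (h l)) -> (forall l y, 0 <= h l y) ->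
  (forall l, (\int[mu]_y (h l y)%:E)%E = (c l)%:E) ->
  iint (fun v => (\prod_(l < k) h l (v 0 l))%:E) = (\prod_(l < k) c l)%:E.
Proof.
elim: k => [|k IH] h c mh h0 hc /=; first by rewrite !big_ord0.
have c0 : forall l, 0 <= c l.
  by move=> l; rewrite -lee_fin -hc; apply: integral_ge0 => y _; rewrite lee_fin.
have P0 : 0 <= \prod_(l < k) c (lift ord0 l) by apply: prodr_ge0 => l _.
transitivity (\int[mu]_x ((\prod_(l < k) c (lift ord0 l)) * h ord0 x)%:E)%E.
  apply: eq_integral => x _.
  rewrite (_ : (fun v : 'rV_k => _) = (fun v => (h ord0 x *
       \prod_(l < k) h (lift ord0 l) (v 0 l))%:E)); last first.
    apply: funext => v; rewrite big_ord_recl row_mx0; congr (_ * _)%:E.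
    by apply: eq_bigr => l _; rewrite row_mxS.
  rewrite iint_scale //.
  - rewrite (IH (fun l => h (lift ord0 l)) (fun l => c (lift ord0 l)) (fun l => mh _) (fun l => h0 _) (fun l => hc _)).
    by rewrite -EFinM mulrC.
  - exact: (@goodf_prod k (fun l => h (lift ord0 l)) (fun l => mh _)).
  - by move=> v; apply: prodr_ge0 => l _.
under eq_integral => x _ do rewrite EFinM.
rewrite ge0_integralZl_EFin //.
- by rewrite hc -EFinM big_ord_recl mulrC.
- by move=> x _; rewrite lee_fin.
- by apply/measurable_EFinP; exact: (mh ord0).
Qed.

End Iint.

Section Gauss.
Variable R : realType.
Local Notation mu := (@lebesgue_measure R).

Definition phi (d y : R) := Num.sqrt d / Num.sqrt (2 * pi) * expR (- (d * y ^+ 2) / 2).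

Lemma pi_gt0' : (0 : R) < pi. Proof. exact: pi_gt0. Qed.

Lemma phi_normal d y : 0 < d -> phi d y = normal_pdf 0 (Num.sqrt d)^-1 y.
Proof.
move=> d0; rewrite /normal_pdf invr_eq0 sqrtr_eq0 leNgt d0 /= /normal_peak /normal_fun subr0.
have sd : (Num.sqrt d)^-1 ^+ 2 = d^-1 by rewrite exprVn sqr_sqrtr ?ltW.
rewrite sd /phi; congr (_ * _).
  have -> : d^-1 * pi *+ 2 = d^-1 * (2 * pi) by rewrite -mulr_natl; ring.
  rewrite [in RHS]sqrtrM ?invr_ge0 ?ltW // [in RHS]sqrtrV ?ltW // invfM invrK.
  by rewrite mulrC.
congr expR; rewrite -mulr_natr; field.
by rewrite gt_eqF.
Qed.


Lemma phi_ge0 d y : 0 <= phi d y.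
Proof. by rewrite /phi mulr_ge0 ?expR_ge0 // divr_ge0 ?sqrtr_ge0. Qed.

Lemma measurable_phi d : measurable_fun [set: R] (phi d).
Proof.
rewrite /phi; apply: measurable_funM; first exact: measurable_cst.
apply: measurableT_comp; first exact: measurable_expR.
rewrite (_ : (fun x => _) = (fun x : R => (- d / 2) * (x * x))); last first.
  by apply: funext => x; rewrite expr2; field.
by apply: measurable_funM; [exact: measurable_cst | exact: measurable_funM].
Qed.

Lemma integral_phi d : 0 < d -> (\int[mu]_y (phi d y)%:E = 1)%E.
Proof.
move=> d0; rewrite -(integral_normal_pdf 0 (Num.sqrt d)^-1).
by apply: eq_integral => y _; rewrite phi_normal.
Qed.

Definition cc (a b : R) := Num.sqrt (Num.sqrt (a * b)) / Num.sqrt ((a + b) / 2).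
Definition psi (a b y : R) := cc a b * phi ((a + b) / 2) y.

Lemma cc_ge0 a b : 0 <= cc a b.
Proof. by rewrite /cc divr_ge0 ?sqrtr_ge0. Qed.

Lemma psi_ge0 a b y : 0 <= psi a b y.
Proof. by rewrite /psi mulr_ge0 ?cc_ge0 ?phi_ge0. Qed.

Lemma measurable_psi a b : measurable_fun [set: R] (psi a b).
Proof.
apply: measurable_funM; first exact: measurable_cst.
exact: measurable_phi.
Qed.

Lemma integral_psi a b : 0 < a -> 0 < b -> (\int[mu]_y (psi a b y)%:E = (cc a b)%:E)%E.
Proof.
move=> a0 b0; rewrite /psi.
under eq_integral => y _ do rewrite EFinM.
rewrite ge0_integralZl_EFin //.
- by rewrite integral_phi ?mule1 // divr_gt0 ?addr_gt0.
- by move=> y _; rewrite lee_fin phi_ge0.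
- by apply/measurable_EFinP; exact: measurable_phi.
- exact: cc_ge0.
Qed.

Lemma cc_same a : 0 < a -> cc a a = 1.
Proof.
move=> a0; rewrite /cc -expr2 sqrtr_sqr ger0_norm ?ltW //.
have -> : (a + a) / 2 = a by field.
by rewrite divff // sqrtr_eq0 -ltNge.
Qed.

Lemma psi_sq a b y : 0 < a -> 0 < b -> psi a b y ^+ 2 = phi a y * phi b y.
Proof.
move=> a0 b0; rewrite /psi /cc /phi.
have h0 : 0 < (a + b) / 2 by rewrite divr_gt0 ?addr_gt0.
have p0 : 0 < pi :> R by exact: pi_gt0.
rewrite !exprMn !exprVn !sqr_sqrtr ?sqrtr_ge0 ?ltW // ?mulr_ge0 ?ltW //; last first.
  by rewrite mulr_gt0.
rewrite sqrtrM ?ltW // [expR _ ^+ 2]expr2 -!expRD.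
have -> : - ((a + b) / 2 * y ^+ 2) / 2 + - ((a + b) / 2 * y ^+ 2) / 2 =
   - (a * y ^+ 2) / 2 + - (b * y ^+ 2) / 2 by field.
rewrite expRD.
have s2 : Num.sqrt (2 * pi) ^+ 2 = 2 * pi :> R by rewrite sqr_sqrtr // mulr_ge0 ?ltW.
have s2' : Num.sqrt (2 * pi) != 0 :> R by rewrite sqrtr_eq0 -ltNge mulr_gt0.
move: s2 s2'; set s := Num.sqrt (2 * pi) => s2 s2'.
rewrite -s2; field.
by rewrite s2' /= gt_eqF // addr_gt0.
Qed.

End Gauss.

Section Mat.
Variable R : realType.

Lemma sqrt_prod (I : Type) (r : seq I) (F : I -> R) : (forall i, 0 <= F i) ->
  Num.sqrt (\prod_(i <- r) F i) = \prod_(i <- r) Num.sqrt (F i).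
Proof.
move=> F0.
pose K := fun a b : R => 0 <= a /\ Num.sqrt a = b.
suff [] : K (\prod_(i <- r) F i) (\prod_(i <- r) Num.sqrt (F i)) by [].
apply: (big_rec2 K); first by split; rewrite ?sqrtr1.
move=> i a b _ [a0 ab]; split; first by rewrite mulr_ge0.
by rewrite sqrtrM // ab.
Qed.

Lemma quad_diag p (d : 'rV[R]_p) (x : 'cV[R]_p) :
  (x^T *m diag_mx d *m x) 0 0 = \sum_j d 0 j * x j 0 ^+ 2.
Proof.
rewrite mul_mx_diag !mxE; apply: eq_bigr => j _.
by rewrite !mxE expr2; ring.
Qed.

Lemma gauss_dens_diag p (d : 'rV[R]_p) (x : 'cV[R]_p) : (forall j, 0 < d 0 j) ->
  gauss_dens (invmx (diag_mx d)) x = \prod_j phi (d 0 j) (x j 0).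
Proof.
move=> d0; rewrite /gauss_dens invmxK det_inv det_diag quad_diag.
have P0 : 0 <= \prod_j d 0 j by apply: prodr_ge0 => j _; exact: ltW.
rewrite sqrtrV // invrK sqrt_prod => [|j]; last exact: ltW.
rewrite /phi big_split big_split /=.
rewrite -expR_sum prodr_const card_ord -exprVn.
congr (_ * _); last first.
  congr expR; rewrite -sumrN mulr_suml; apply: eq_bigr => j _; ring.
by rewrite mulrC.
Qed.


Definition dlt (tau : R) (n : nat) := tau / Num.sqrt (n%:R).

Definition dprec (M tau : R) (n p : nat) (th : {ffun 'I_(p./2) -> bool}) (j : 'I_p) : R :=
  M^-1 + \sum_(m < p./2) ((th m)%:R * dlt tau n) * (embm m == j)%:R.

Lemma Sigma_inv_diag (M tau : R) (n p : nat) (th : {ffun 'I_(p./2) -> bool}) :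
  Sigma_inv M tau n th = diag_mx (\row_j dprec M tau n th j).
Proof.
apply/matrixP => i j; rewrite !mxE summxE.
under eq_bigr => k _ do rewrite !mxE.
case: (eqVneq i j) => [<-|ne].
  rewrite mulr1 mulr1n /dprec /dlt; congr (_ + _); apply: eq_bigr => k _.
  by rewrite andbb eq_sym.
rewrite mulr0 mulr0n add0r big1 // => k _.
case: (eqVneq i (embm k)) => [ei|]; last by rewrite /= mulr0.
case: (eqVneq j (embm k)) => [ej|]; last by rewrite andbF mulr0.
by move: ne; rewrite ei ej eqxx.
Qed.

Lemma dprec_gt0 (M tau : R) (n p : nat) (th : {ffun 'I_(p./2) -> bool}) j :
  0 < M -> 0 <= tau -> 0 < dprec M tau n th j.
Proof.
move=> M0 t0; rewrite /dprec ltr_wpDr ?invr_gt0 //.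
apply: sumr_ge0 => m _; rewrite !mulr_ge0 ?ler0n // /dlt divr_ge0 ?sqrtr_ge0 //.
Qed.

Lemma invSigma (M tau : R) (n p : nat) (th : {ffun 'I_(p./2) -> bool}) :
  invmx (Sigma M tau n th) = diag_mx (\row_j dprec M tau n th j).
Proof. by rewrite /Sigma invmxK Sigma_inv_diag. Qed.

Lemma gauss_dens_Sigma (M tau : R) (n p : nat) (th : {ffun 'I_(p./2) -> bool}) x :
  0 < M -> 0 <= tau ->
  gauss_dens (Sigma M tau n th) x = \prod_j phi (dprec M tau n th j) (x j 0).
Proof.
move=> M0 t0; rewrite /Sigma Sigma_inv_diag gauss_dens_diag => [|j].
  by apply: eq_bigr => j _; rewrite mxE.
by rewrite mxE dprec_gt0.
Qed.

Definition colix (n p : nat) (l : 'I_(n * p)) : 'I_p :=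
  (enum_val (cast_ord (esym (mxvec_cast n p)) l)).2.

Lemma colixE n p (i : 'I_n) (j : 'I_p) : colix (mxvec_index i j) = j.
Proof. by rewrite /colix /mxvec_index cast_ordK enum_rankK. Qed.

Lemma prod_mxvec n p (G : 'I_(n * p) -> R) :
  \prod_(l < n * p) G l = \prod_(i < n) \prod_(j < p) G (mxvec_index i j).
Proof.
rewrite (reindex _ (curry_mxvec_bij _ _)) /=.
by rewrite pair_bigA; apply: eq_bigr => -[i j] _.
Qed.

Lemma prod_colix n p (F : 'I_p -> R) :
  \prod_(l < n * p) F (colix l) = (\prod_(j < p) F j) ^+ n.
Proof.
rewrite prod_mxvec.
under eq_bigr => i _ do under eq_bigr => j _ do rewrite colixE.
by rewrite prodr_const card_ord.
Qed.

Lemma joint_dens_Sigma (M tau : R) (n p : nat) (th : {ffun 'I_(p./2) -> bool}) v :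
  0 < M -> 0 <= tau ->
  joint_dens (Sigma M tau n th) (vec_mx v) =
  \prod_(l < n * p) phi (dprec M tau n th (colix l)) (v 0 l).
Proof.
move=> M0 t0; rewrite /joint_dens prod_mxvec; apply: eq_bigr => i _.
rewrite gauss_dens_Sigma //; apply: eq_bigr => j _.
by rewrite colixE !mxE.
Qed.


Lemma embm_inj p : injective (@embm p).
Proof. by move=> m m' /(congr1 val) /= e; apply: val_inj. Qed.

Lemma sum_ind p (j0 : 'I_p) : \sum_(j < p) ((j0 == j)%:R : R) = 1.
Proof.
rewrite (bigD1 j0) //= eqxx big1 ?addr0 // => j nj.
by rewrite eq_sym (negbTE nj).
Qed.

Lemma sum_dprec (M tau : R) (n p : nat) (th : {ffun 'I_(p./2) -> bool}) :
  \sum_j dprec M tau n th j = p%:R * M^-1 + dlt tau n * \sum_m (th m)%:R.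
Proof.
rewrite /dprec big_split /= sumr_const card_ord mulr_natl; congr (_ + _).
rewrite exchange_big mulr_sumr; apply: eq_bigr => m _.
by rewrite -mulr_sumr sum_ind mulr1 mulrC.
Qed.

Lemma dprec_embm (M tau : R) (n p : nat) (th : {ffun 'I_(p./2) -> bool}) m :
  dprec M tau n th (embm m) = M^-1 + (th m)%:R * dlt tau n.
Proof.
rewrite /dprec (bigD1 m) //= eqxx mulr1 big1 ?addr0 // => m' nm.
by rewrite (inj_eq (@embm_inj p)) (negbTE nm) mulr0.
Qed.

Lemma w_Sigma (M tau : R) (n p : nat) (th : {ffun 'I_(p./2) -> bool}) j :
  w_GMV (Sigma M tau n th) j 0 = dprec M tau n th j / \sum_k dprec M tau n th k.
Proof.
rewrite /w_GMV invSigma mul_mx_diag mul_diag_mx !mxE mulrC mulr1; congr (_ * _).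
congr (_^-1); apply: eq_bigr => k _.
by rewrite !mxE mulr1 mul1r.
Qed.

Lemma key_ineq (a dl S1 S2 q P : R) : 0 < a -> 0 < dl -> 0 < S1 -> 0 < S2 ->
  S2 - S1 <= dl * q -> 2 * q * a <= S1 -> S2 <= P ->
  (dl / (2 * P)) ^+ 2 <= ((a + dl) / S2 - a / S1) ^+ 2.
Proof.
move=> a0 d0 S10 S20 h1 h2 h3.
set x := (a + dl) / S2 - a / S1.
have ex : x * (S1 * S2) = dl * S1 + a * (S1 - S2).
  by rewrite /x; field; rewrite !gt_eqF.
have P0 : 0 < P by exact: lt_le_trans S20 h3.
have hx1 : dl * S1 <= 2 * (x * S2) * S1.
  have : dl * S1 / 2 <= x * (S1 * S2) by rewrite ex; nra.
  nra.
have hx2 : dl <= 2 * (x * S2).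
  by rewrite -(ler_pM2r S10).
have x0 : 0 <= x.
  have : 0 < x * S2 by nra.
  by rewrite pmulr_lgt0 // => /ltW.
have hx : dl / (2 * P) <= x.
  rewrite ler_pdivrMr ?mulr_gt0 //; nra.
rewrite ler_sqr ?nnegrE //; exact: ltW (divr_gt0 d0 (mulr_gt0 _ P0)).
Qed.


Lemma sum_narrow p (F : 'I_p -> R) : (forall j, 0 <= F j) ->
  \sum_(m < p./2) F (embm m) <= \sum_(j < p) F j.
Proof.
move=> F0; rewrite (bigID (fun j : 'I_p => (j < p./2)%N)) /=.
rewrite -[X in X <= _]addr0 lerD //; last by apply: sumr_ge0.
by rewrite (big_ord_narrow_cond (P := predT) (half_le p)).
Qed.

Lemma sumth_bounds k (th : {ffun 'I_k -> bool}) :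
  0 <= \sum_m ((th m)%:R : R) <= k%:R.
Proof.
apply/andP; split; first by apply: sumr_ge0 => m _; rewrite ler0n.
rewrite -[k in _ <= k%:R]card_ord -sumr_const; apply: ler_sum => m _.
by case: (th m).
Qed.

Lemma half_R p : 2 * ((p./2)%:R : R) <= p%:R.
Proof.
rewrite -natrM ler_nat -{2}(odd_double_half p) mul2n leq_addl //.
Qed.

Lemma sqnorm_bound (M tau : R) (n p : nat) (t t' : {ffun 'I_(p./2) -> bool}) :
  0 < M -> 0 < dlt tau n -> (0 < p)%N ->
  (hamming t t')%:R * (dlt tau n / (2 * (p%:R * (M^-1 + dlt tau n)))) ^+ 2
  <= sqnorm (w_GMV (Sigma M tau n t') - w_GMV (Sigma M tau n t)).
Proof.
move=> M0 d0 p0.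
set a := M^-1; set dl := dlt tau n; set c := (dl / _) ^+ 2.
have a0 : 0 < a by rewrite invr_gt0.
set q : R := (p./2)%:R.
have hq := half_R p.
have pR : 0 < p%:R :> R by rewrite ltr0n.
pose S (th : {ffun 'I_(p./2) -> bool}) := \sum_j dprec M tau n th j.
have SE (th : {ffun 'I_(p./2) -> bool}) : S th = p%:R * a + dl * \sum_m (th m)%:R by rewrite /S sum_dprec.
have Slo (th : {ffun 'I_(p./2) -> bool}) : p%:R * a <= S th.
  rewrite SE lerDl; apply: mulr_ge0; first exact: ltW.
  by case/andP: (sumth_bounds th).
have Shi (th : {ffun 'I_(p./2) -> bool}) : S th <= p%:R * a + dl * q.
  by rewrite SE lerD2l ler_pM2l //; case/andP: (sumth_bounds th).
have S0 (th : {ffun 'I_(p./2) -> bool}) : 0 < S th by apply: lt_le_trans (Slo th); rewrite mulr_gt0.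
have Sdiff (th : {ffun 'I_(p./2) -> bool}) (th' : {ffun 'I_(p./2) -> bool}) : S th' - S th <= dl * q.
  rewrite !SE; case/andP: (sumth_bounds th) => k0 _; case/andP: (sumth_bounds th') => _ k1.
  move: k0 k1; set k := \sum_m ((th m)%:R : R); set k' := \sum_m ((th' m)%:R : R) => k0 k1.
  have h1 : dl * k' <= dl * q.
    rewrite ler_pM2l; [exact: k1 | exact: d0].
  have h2 : 0 <= dl * k by apply: mulr_ge0; [exact: ltW | exact: k0].
  lra.
have S1c (th : {ffun 'I_(p./2) -> bool}) : 2 * q * a <= S th.
  apply: (le_trans _ (Slo th)); rewrite ler_pM2r //.
have S2c (th : {ffun 'I_(p./2) -> bool}) : S th <= p%:R * (a + dl).
  apply: (le_trans (Shi th)); rewrite mulrDr lerD2l mulrC ler_pM2r //.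
  by apply: le_trans hq; rewrite ler_peMl // ?ler1n // (le_trans _ hq) // mulr_ge0 ?ler0n.
rewrite /sqnorm.
have hN := @sum_narrow p (fun j => ((w_GMV (Sigma M tau n t') - w_GMV (Sigma M tau n t)) j 0) ^+ 2) (fun j => sqr_ge0 _).
apply: le_trans hN.
rewrite /hamming natr_sum mulr_suml; apply: ler_sum => m _.
have eB : forall (A B : 'cV[R]_p) j, (A - B) j 0 = A j 0 - B j 0 by move=> *; rewrite !mxE.
rewrite eB !w_Sigma !dprec_embm -/(S t) -/(S t').
case: (eqVneq (t m) (t' m)) => [e|ne]; first by rewrite mul0r sqr_ge0.
rewrite mul1r.
case Et: (t m) ne; case Et': (t' m) => // _; rewrite /= ?mul1r ?mul0r ?addr0.
- rewrite -sqrrN opprB.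
  exact: (key_ineq a0 d0 (S0 t') (S0 t) (Sdiff t' t) (S1c t') (S2c t)).
- exact: (key_ineq a0 d0 (S0 t) (S0 t') (Sdiff t t') (S1c t) (S2c t')).
Qed.

End Mat.



Section Aff.
Variable R : realType.
Local Notation mu := (@lebesgue_measure R).

Lemma amgm (u w s l : R) : 0 <= u -> 0 <= w -> 0 <= s -> s ^+ 2 = u * w -> 0 < l ->
  s <= l / 2 * Num.min u w + (2 * l)^-1 * u + (2 * l)^-1 * w.
Proof.
move=> u0 w0 s0 e l0.
suff : 2 * l * s <= l ^+ 2 * Num.min u w + Num.max u w.
  move=> h.
  have hmx : Num.max u w <= u + w.
    by rewrite /Num.max; case: ifP => _; lra.
  have h2 : s <= (l ^+ 2 * Num.min u w + Num.max u w) / (2 * l).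
    by rewrite ler_pdivlMr ?mulr_gt0 // mulrC.
  apply: (le_trans h2).
  have -> : l / 2 * Num.min u w + (2 * l)^-1 * u + (2 * l)^-1 * w =
     (l ^+ 2 * Num.min u w + (u + w)) / (2 * l) by field; rewrite gt_eqF.
  by rewrite ler_pM2r ?invr_gt0 ?mulr_gt0 // lerD2l.
have emm : Num.min u w * Num.max u w = u * w.
  by rewrite /Num.min /Num.max; case: ifP => _ //; rewrite mulrC.
have m0 : 0 <= Num.min u w by rewrite le_min u0 w0.
have M0 : 0 <= Num.max u w by rewrite le_max u0.
move: emm m0 M0; set m := Num.min u w; set M := Num.max u w => emm m0 M0.
have sq : (2 * l * s) ^+ 2 <= (l ^+ 2 * m + M) ^+ 2.
  have : 0 <= (l ^+ 2 * m - M) ^+ 2 by exact: sqr_ge0.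
  rewrite !exprMn e -emm; nra.
rewrite -ler_sqr ?nnegrE //; last by rewrite addr_ge0 // mulr_ge0 // sqr_ge0.
by rewrite !mulr_ge0 // ltW.
Qed.


Lemma goodf_scale k (c : R) (f : 'rV[R]_k -> R) : goodf f -> goodf (fun v => c * f v).
Proof.
move=> gf; apply: (good_un (h := fun y => c * y)) gf.
by apply: measurable_funM => //; exact: measurable_cst.
Qed.

Lemma goodf_add k (f g : 'rV[R]_k -> R) : goodf f -> goodf g -> goodf (fun v => f v + g v).
Proof.
move=> gf gg; apply: (good_bin (h := fun a b => a + b)) gf gg.
by move=> d T f' g' mf mg; exact: measurable_funD.
Qed.

Lemma goodf_min k (f g : 'rV[R]_k -> R) : goodf f -> goodf g -> goodf (fun v => Num.min (f v) (g v)).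
Proof.
move=> gf gg; apply: (good_bin (h := fun a b => Num.min a b)) gf gg.
by move=> d T f' g' mf mg; exact: measurable_minr.
Qed.

Lemma aff_generic k (hf hg hp : 'I_k -> R -> R) (cp : 'I_k -> R) :
  (forall l, measurable_fun setT (hf l)) -> (forall l, measurable_fun setT (hg l)) ->
  (forall l, measurable_fun setT (hp l)) ->
  (forall l y, 0 <= hf l y) -> (forall l y, 0 <= hg l y) -> (forall l y, 0 <= hp l y) ->
  (forall l, (\int[mu]_y (hf l y)%:E = 1%:E)%E) ->
  (forall l, (\int[mu]_y (hg l y)%:E = 1%:E)%E) ->
  (forall l, (\int[mu]_y (hp l y)%:E = (cp l)%:E)%E) ->
  (forall l y, hp l y ^+ 2 = hf l y * hg l y) ->
  0 < \prod_l cp l ->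
  (((\prod_l cp l) ^+ 2 / 2)%:E <=
    iint (fun v => (Num.min (\prod_l hf l (v 0 l)) (\prod_l hg l (v 0 l)))%:E))%E.
Proof.
move=> mf mg mp f0 g0 p0 if1 ig1 ip e B0.
set F := fun v : 'rV[R]_k => \prod_l hf l (v 0 l).
set G := fun v : 'rV[R]_k => \prod_l hg l (v 0 l).
set P := fun v : 'rV[R]_k => \prod_l hp l (v 0 l).
set B := \prod_l cp l.
have F0 v : 0 <= F v by apply: prodr_ge0 => l _.
have G0 v : 0 <= G v by apply: prodr_ge0 => l _.
have P0 v : 0 <= P v by apply: prodr_ge0 => l _.
have gF : goodf F by exact: goodf_prod.
have gG : goodf G by exact: goodf_prod.
have gP : goodf P by exact: goodf_prod.
have iF : iint (fun v => (F v)%:E) = 1%:E.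
  by rewrite (iint_prod (c := fun _ => 1)) // big1.
have iG : iint (fun v => (G v)%:E) = 1%:E.
  by rewrite (iint_prod (c := fun _ => 1)) // big1.
have iP : iint (fun v => (P v)%:E) = B%:E by rewrite (iint_prod (c := cp)).
set lam := 2 / B.
have lam0 : 0 < lam by rewrite divr_gt0.
have gm : goodf (fun v => Num.min (F v) (G v)) by exact: goodf_min.
have m0 v : 0 <= Num.min (F v) (G v) by rewrite le_min F0 G0.
have eP v : P v ^+ 2 = F v * G v.
  rewrite /P /F /G -prodrXl -big_split /=; apply: eq_bigr => l _; exact: e.
have hle := iint_le gP (goodf_add (goodf_add (goodf_scale (lam / 2) gm)
   (goodf_scale (2 * lam)^-1 gF)) (goodf_scale (2 * lam)^-1 gG)) P0
   (fun v => amgm (F0 v) (G0 v) (P0 v) (eP v) lam0).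
have c1 : 0 <= lam / 2 by rewrite divr_ge0 // ltW.
have c2 : 0 <= (2 * lam)^-1 by rewrite invr_ge0 mulr_ge0 // ltW.
have gA := goodf_scale (lam / 2) gm.
have gB := goodf_scale (2 * lam)^-1 gF.
have gC := goodf_scale (2 * lam)^-1 gG.
have A0 v : 0 <= lam / 2 * Num.min (F v) (G v) by rewrite mulr_ge0.
have B0' v : 0 <= (2 * lam)^-1 * F v by rewrite mulr_ge0.
have C0 v : 0 <= (2 * lam)^-1 * G v by rewrite mulr_ge0.
rewrite iP (iint_add (goodf_add gA gB) gC (fun v => addr_ge0 (A0 v) (B0' v)) C0) in hle.
rewrite (iint_add gA gB A0 B0') in hle.
rewrite (iint_scale c1 gm m0) (iint_scale c2 gF F0) (iint_scale c2 gG G0) iF iG in hle.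
move: hle; set m := iint _.
have mge0 : (0 <= m)%E by apply: iint_ge0 => v; rewrite lee_fin.
case: m mge0 => [r| |] //= r0; last by rewrite leey.
rewrite -!EFinM -!EFinD lee_fin => h.
rewrite lee_fin.
have e1 : lam / 2 * r + (2 * lam)^-1 * 1 + (2 * lam)^-1 * 1 = r / B + B / 2.
  by rewrite /lam; field; rewrite gt_eqF.
move: h; rewrite e1 => h.
have er : r = r / B * B by field; rewrite gt_eqF.
rewrite er; move: h; set t := r / B => h.
have hB : 0 < B := B0.
have h1 : 0 <= t - B / 2 by lra.
have : 0 <= (t - B / 2) * B by apply: mulr_ge0 => //; exact: ltW.
nra.
Qed.


Lemma ham1 k (t t' : {ffun 'I_k -> bool}) : hamming t t' = 1%N ->
  exists m0, t m0 != t' m0 /\ forall m, m != m0 -> t m = t' m.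
Proof.
move=> H.
have [m0 Hm0|none] := pickP (fun m => t m != t' m); last first.
  move: H; rewrite /hamming big1 // => m _.
  by have := none m; rewrite /= => /negbFE ->.
exists m0; split => // m nm.
move: H; rewrite /hamming (bigD1 m0) //= Hm0 add1n => -[] /eqP.
rewrite sum_nat_eq0 => /forallP /(_ m); rewrite nm /= eqb0 negbK => /eqP //.
Qed.

Lemma cc_sym (a b : R) : cc a b = cc b a.
Proof. by rewrite /cc [a * b]mulrC [a + b]addrC. Qed.

Lemma prod_cc (M tau : R) (n p : nat) (t t' : {ffun 'I_(p./2) -> bool}) :
  0 < M -> 0 <= tau -> hamming t t' = 1%N ->
  \prod_(j < p) cc (dprec M tau n t j) (dprec M tau n t' j) = cc (M^-1) (M^-1 + dlt tau n).
Proof.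
move=> M0 t0 /ham1 [m0 [ne eq]].
rewrite (bigD1 (embm m0)) //= big1 ?mulr1 => [|j nj]; last first.
  have -> : dprec M tau n t j = dprec M tau n t' j.
    rewrite /dprec; congr (_ + _); apply: eq_bigr => m _.
    case: (eqVneq m m0) => [->|nm]; first by rewrite eq_sym (negbTE nj) !mulr0.
    by rewrite eq.
  by rewrite cc_same // dprec_gt0.
rewrite !dprec_embm.
by case: (t m0) ne; case: (t' m0) => //= _; rewrite ?mul1r ?mul0r ?addr0 // cc_sym.
Qed.

Lemma affinity_lb (M tau : R) (n p : nat) (t t' : {ffun 'I_(p./2) -> bool}) :
  0 < M -> 0 < tau -> hamming t t' = 1%N ->
  ((((cc (M^-1) (M^-1 + dlt tau n)) ^+ n) ^+ 2 / 2)%:E <= affinity M tau n t t')%E.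
Proof.
move=> M0 tau0 h1.
have t0 : 0 <= tau by exact: ltW.
rewrite /affinity.
rewrite (_ : (fun v => _) = (fun v : 'rV[R]_(n * p) => (Num.min
   (\prod_l phi (dprec M tau n t (colix l)) (v 0 l))
   (\prod_l phi (dprec M tau n t' (colix l)) (v 0 l)))%:E)); last first.
  by apply: funext => v; rewrite !joint_dens_Sigma.
have -> : cc M^-1 (M^-1 + dlt tau n) ^+ n =
   \prod_(l < n * p) cc (dprec M tau n t (colix l)) (dprec M tau n t' (colix l)).
  by rewrite (@prod_colix R n p (fun j => cc (dprec M tau n t j) (dprec M tau n t' j))) prod_cc.
apply: (@aff_generic (n * p) (fun l => phi (dprec M tau n t (colix l)))
   (fun l => phi (dprec M tau n t' (colix l)))
   (fun l => psi (dprec M tau n t (colix l)) (dprec M tau n t' (colix l)))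
   (fun l => cc (dprec M tau n t (colix l)) (dprec M tau n t' (colix l)))).
- by move=> l; exact: measurable_phi.
- by move=> l; exact: measurable_phi.
- by move=> l; exact: measurable_psi.
- by move=> l y; exact: phi_ge0.
- by move=> l y; exact: phi_ge0.
- by move=> l y; exact: psi_ge0.
- by move=> l; rewrite integral_phi // dprec_gt0.
- by move=> l; rewrite integral_phi // dprec_gt0.
- by move=> l; rewrite integral_psi // dprec_gt0.
- by move=> l y; rewrite psi_sq // dprec_gt0.
- apply: prodr_gt0 => l _.
  have h1' : 0 < dprec M tau n t (colix l) by rewrite dprec_gt0.
  have h2' : 0 < dprec M tau n t' (colix l) by rewrite dprec_gt0.
  move: h1' h2'; set d1 := dprec _ _ _ _ _; set d2 := dprec _ _ _ _ _ => h1' h2'.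
  clearbody d1 d2.
  by rewrite /cc divr_gt0 // sqrtr_gt0 ?sqrtr_gt0 ?mulr_gt0 ?divr_gt0 ?addr_gt0.
Qed.


Lemma Q_lb (a dl : R) : 0 < a -> 0 <= dl ->
  1 - dl ^+ 2 / (4 * a ^+ 2) <= cc a (a + dl) ^+ 2.
Proof.
move=> a0 d0.
have h0 : 0 < (a + (a + dl)) / 2 by rewrite divr_gt0 // addr_gt0 // ltr_wpDr.
have z0 : 0 <= a * (a + dl) by rewrite mulr_ge0 // ?addr_ge0 // ltW.
rewrite /cc exprMn exprVn !sqr_sqrtr ?sqrtr_ge0 ?(ltW h0) //.
set s := Num.sqrt _; set h := (a + (a + dl)) / 2.
have s0 : 0 <= s by exact: sqrtr_ge0.
have ss : s ^+ 2 = a * (a + dl) by rewrite sqr_sqrtr.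
have hh : h = a + dl / 2 by rewrite /h; field.
have sh2 : s ^+ 2 <= h ^+ 2 by rewrite ss hh; nra.
have sh : s <= h by move: sh2; rewrite ler_sqr // nnegrE ltW.
set Q := s / h.
have Q0 : 0 <= Q by rewrite divr_ge0 // ltW.
have Q1 : Q <= 1 by rewrite ler_pdivrMr // mul1r.
have QQ : Q ^+ 2 <= Q by rewrite expr2 ler_piMr.
apply: (le_trans _ QQ).
rewrite /Q expr_div_n ss hh.
have a2 : 0 < a ^+ 2 by rewrite exprn_gt0.
have hp : 0 < a + dl / 2 by apply: ltr_wpDr => //; apply: divr_ge0.
have h2 : 0 < (a + dl / 2) ^+ 2 by rewrite exprn_gt0.
rewrite lerBlDr -lerBlDl.
have -> : 1 - a * (a + dl) / (a + dl / 2) ^+ 2 = (dl / 2) ^+ 2 / (a + dl / 2) ^+ 2.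
  by field; rewrite gt_eqF //; lra.
have -> : dl ^+ 2 / (4 * a ^+ 2) = (dl / 2) ^+ 2 / a ^+ 2.
  by field; rewrite gt_eqF.
apply: ler_wpM2l; first by rewrite sqr_ge0.
rewrite lef_pV2 ?posrE //.
have : 0 <= dl / 2 by apply: divr_ge0.
nra.
Qed.

Lemma exp_lb (x : R) (n : nat) : 0 <= x -> x <= 1 / 2 ->
  expR (- (2 * x * n%:R)) <= (1 - x) ^+ n.
Proof.
move=> x0 x1.
have b : expR (- (2 * x)) <= 1 - x.
  rewrite expRN.
  have e1 : 1 + 2 * x <= expR (2 * x) by exact: expR_ge1Dx.
  have p1 : 0 < 1 + 2 * x by lra.
  have e2 : (expR (2 * x))^-1 <= (1 + 2 * x)^-1.
    by rewrite lef_pV2 ?posrE ?expR_gt0.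
  apply: (le_trans e2).
  rewrite -[X in X <= _]mulr1 ler_pdivrMl //; nra.
have -> : - (2 * x * n%:R) = n%:R * (- (2 * x)) by ring.
rewrite expRM_natl lerXn2r ?nnegrE // ?expR_ge0 //; lra.
Qed.


End Aff.

Lemma half_ge (q : nat) : (2 <= q)%N -> (q <= 3 * q./2)%N.
Proof.
move=> q2; have e := odd_double_half q; have o := leq_b1 (odd q).
rewrite -mul2n in e; lia.
Qed.

Lemma aff_bound (R : realType) (M tau : R) (n p : nat) (t t' : {ffun 'I_(p./2) -> bool}) :
  0 < M -> 0 < tau -> (0 < n)%N -> tau ^+ 2 * M ^+ 2 <= n%:R -> hamming t t' = 1%N ->
  ((expR (- (tau ^+ 2 * M ^+ 2) / 2) / 2)%:E <= affinity M tau n t t')%E.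
Proof.
move=> M0 t0 n0 hn h1.
apply: (le_trans _ (@affinity_lb R M tau n p t t' M0 t0 h1)).
rewrite lee_fin ler_pM2r // -exprM mulnC exprM.
set a := M^-1; set dl := dlt tau n.
have a0 : 0 < a by rewrite invr_gt0.
have nR : 0 < n%:R :> R by rewrite ltr0n.
have dl2 : dl ^+ 2 = tau ^+ 2 / n%:R by rewrite /dl /dlt expr_div_n sqr_sqrtr // ler0n.
have dl0 : 0 <= dl by rewrite /dl /dlt divr_ge0 ?sqrtr_ge0 // ltW.
set x := dl ^+ 2 / (4 * a ^+ 2).
have xe : x = tau ^+ 2 * M ^+ 2 / (4 * n%:R).
  by rewrite /x dl2 /a; field; rewrite !gt_eqF.
have x0 : 0 <= x by rewrite xe divr_ge0 ?mulr_ge0 ?sqr_ge0 // ltW.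
have x1 : x <= 1 / 2.
  rewrite xe ler_pdivrMr ?mulr_gt0 //; lra.
have Ql := Q_lb a0 dl0.
have e2 : expR (- (tau ^+ 2 * M ^+ 2) / 2) = expR (- (2 * x * n%:R)).
  by rewrite xe; congr expR; field; rewrite gt_eqF.
rewrite e2; apply: (le_trans (exp_lb n x0 x1)).
rewrite lerXn2r ?nnegrE //; first lra.
exact: sqr_ge0.
Qed.

Lemma ratio_bound (R : realType) (M tau : R) (n p : nat) (t t' : {ffun 'I_(p./2) -> bool}) :
  0 < M -> 0 < tau -> (0 < n)%N -> (0 < p)%N -> dlt tau n <= M / 3 ->
  (1 <= hamming t t')%N ->
  tau ^+ 2 / (4 * (M^-1 + M / 3) ^+ 2 * n%:R * p%:R ^+ 2) <= Defs.ratio M tau n t t'.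
Proof.
move=> M0 t0 n0 p0 hd h1.
have nR : 0 < n%:R :> R by rewrite ltr0n.
have pR : 0 < p%:R :> R by rewrite ltr0n.
have d0 : 0 < dlt tau n by rewrite /dlt divr_gt0 // sqrtr_gt0.
have hb := @sqnorm_bound R M tau n p t t' M0 d0 p0.
have HR : 0 < (hamming t t')%:R :> R by rewrite ltr0n.
rewrite /Defs.ratio ler_pdivlMr //; apply: le_trans hb; rewrite mulrC ler_pM2l //.
set a := M^-1; set dl := dlt tau n; set K := a + M / 3.
have a0 : 0 < a by rewrite invr_gt0.
have dl2 : dl ^+ 2 = tau ^+ 2 / n%:R by rewrite /dl /dlt expr_div_n sqr_sqrtr // ler0n.
have hK : a + dl <= K by rewrite lerD2l.
have K0 : 0 < K by rewrite addr_gt0 // divr_gt0.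
have e : tau ^+ 2 / (4 * K ^+ 2 * n%:R * p%:R ^+ 2) = (dl / (2 * (p%:R * K))) ^+ 2.
  by rewrite expr_div_n dl2; field; rewrite !gt_eqF.
have dl0 : 0 < dl := d0.
have ad0 : 0 < a + dl by rewrite addr_gt0.
rewrite e lerXn2r ?nnegrE //.
- by apply: divr_ge0; [exact: ltW | rewrite mulr_ge0 // mulr_ge0 // ltW].
- by apply: divr_ge0; [exact: ltW | rewrite mulr_ge0 // mulr_ge0 // ltW].
rewrite ler_pM2l // lef_pV2 ?posrE ?mulr_gt0 //.
by rewrite ler_pM2l // ler_pM2l.
Qed.

Unset Implicit Arguments.

Theorem lemma1 (R : realType) (M tau : R) (p : nat -> nat) :
  0 < M -> 0 < tau ->
  (forall K : nat, \forall n \near \oo, (K <= p n)%N) ->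
  (forall n : nat, (0 < n)%N -> tau / Num.sqrt (n%:R) <= M / 3) ->
  tau / M <= 3^-1 ->
  exists2 C : R, 0 < C &
    \forall n \near \oo,
      ((C / (n%:R * (p n)%:R))%:E <= lhs M tau n (p n))%E.
Proof.
move=> M0 t0 hp hdl _.
set K := M^-1 + M / 3.
set E := expR (- (tau ^+ 2 * M ^+ 2) / 2).
have K0 : 0 < K by rewrite addr_gt0 ?invr_gt0 // divr_gt0.
have E0 : 0 < E by exact: expR_gt0.
exists (tau ^+ 2 * E / (48 * K ^+ 2)).
  by rewrite divr_gt0 ?mulr_gt0 ?exprn_gt0.
near=> n.
have n1 : (0 < n)%N by near: n; exact: nbhs_infty_gt.
have p2 : (2 <= p n)%N by near: n; exact: hp 2%N.
have hn : tau ^+ 2 * M ^+ 2 <= n%:R by near: n; exact: nbhs_infty_ger.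
rewrite /lhs.
set pn := p n.
have pn0 : (0 < pn)%N by apply: leq_trans p2.
set X := \big[Order.min/+oo%E]_(tt | _) _.
set Z := \big[Order.min/+oo%E]_(tt | _) _.
set r0 := tau ^+ 2 / (4 * K ^+ 2 * n%:R * pn%:R ^+ 2).
have lb1 : (r0%:E <= X)%E.
  apply: le_bigmin => [|tt htt]; first exact: leey.
  rewrite lee_fin; apply: ratio_bound => //.
  exact: hdl.
have lb3 : ((E / 2)%:E <= Z)%E.
  apply: le_bigmin => [|tt /eqP htt]; first exact: leey.
  exact: aff_bound.
set y := (pn./2)%:R / 2.
have nR : 0 < n%:R :> R by rewrite ltr0n.
have pR : 0 < pn%:R :> R by rewrite ltr0n.
have r00 : 0 <= r0 by rewrite divr_ge0 ?sqr_ge0 // !mulr_ge0 ?sqr_ge0 ?ltW.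
have yb : pn%:R / 6 <= y.
  have := (@half_ge pn p2); rewrite -(ler_nat R) natrM => h.
  rewrite /y; lra.
have y0 : 0 <= y by apply: le_trans yb; rewrite divr_ge0 // ltW.
have r0E : (0 <= r0%:E)%E by rewrite lee_fin.
have y0E : (0 <= y%:E)%E by rewrite lee_fin.
have inner := lee_pmul r0E y0E lb1 (lexx y%:E).
have E20 : 0 <= E / 2 by rewrite divr_ge0 // ltW.
have ryE : (0 <= r0%:E * y%:E)%E by rewrite -EFinM lee_fin mulr_ge0.
have E2E : (0 <= (E / 2)%:E)%E by rewrite lee_fin.
have outer := lee_pmul ryE E2E inner lb3.
apply: le_trans outer; rewrite -!EFinM lee_fin.
have -> : tau ^+ 2 * E / (48 * K ^+ 2) / (n%:R * pn%:R) = r0 * (pn%:R / 6) * (E / 2).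
  by rewrite /r0; field; rewrite !gt_eqF.
by rewrite ler_pM2r ?divr_gt0 // ler_wpM2l.
Unshelve. all: end_near.
Qed.
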